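(* For each integer $N\ge 1$, let $A_N^{\mathrm{quant}}$ be the $N\times N$ real matrix with entries \[ (A_N^{\mathrm{quant}})_{m,n} = \frac{\sin \frac{\pi}{N}}{\sin \frac{\pi}{N}(m-n)} \quad (m\neq n), \qquad (A_N^{\mathrm{quant}})_{m,m}=0, \] $m,n=1,\dots,N$. Then the set of eigenvalues of $A_N^{\mathrm{quant}}$ is \[ \left\{ \pm 2i \left(\sin \tfrac{\pi}{N}\right)\left(k-\tfrac12\right) \;\middle|\; k=1,\dots,\tfrac{N}{2}\right\} \quad\text{if $N$ is even}, \] and \[ \{0\}\cup\left\{ \pm 2i \left(\sin \tfrac{\pi}{N}\right) k \;\middle|\; k=1,\dots,\tfrac{N-1}{2}\right\} \quad\text{if $N$ is odd}. \] *)

(* Defs.v *)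
From HB Require Import structures.
From mathcomp Require Import all_boot all_order all_algebra.
From mathcomp Require Import reals trigo.
From mathcomp Require Export complex.
Set Implicit Arguments. Unset Strict Implicit. Unset Printing Implicit Defensive.
Import Order.TTheory GRing.Theory Num.Theory.
Local Open Scope ring_scope.
Local Open Scope complex_scope.

(* A_N^quant, indexed by 'I_N (0-based; only the differences m - n matter,
   so this coincides with the paper's 1-based indexing). *)
Definition Aquant (R : realType) (N : nat) : 'M[R]_N :=
  \matrix_(m < N, n < N)
    (if m == n then 0
     else sin (pi / N%:R) / sin (pi / N%:R * ((m : nat)%:R - (n : nat)%:R))).

Definition AquantC (R : realType) (N : nat) : 'M[R[i]]_N :=
  map_mx (fun x : R => x%:C) (Aquant R N).

(* Main.v *)
Require Import Defs.
From HB Require Import structures.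
From mathcomp Require Import all_boot all_order all_algebra.
From mathcomp Require Import reals trigo.
From mathcomp Require Import complex.
From mathcomp Require Import ring lra zify.
Import Order.TTheory GRing.Theory Num.Theory.
Local Open Scope ring_scope.
Local Open Scope complex_scope.

Section Key.
Variable F : numFieldType.
Variables (n : nat) (q : F).
Hypothesis qN : q ^+ n.+1 = 1.
Hypothesis qprim : forall r, (0 < r < n.+1)%N -> q ^+ r != 1.
Local Notation N := n.+1.
Let Q (m : 'I_N) := q ^+ m.

Lemma Q_add (x y : 'I_N) : Q (x + y) = Q x * Q y.
Proof. by rewrite /Q /= expr_mod // exprD. Qed.

Lemma q_neq0 : q != 0.
Proof. by apply: contra_eq_neq qN => ->; rewrite expr0n /= eq_sym oner_eq0. Qed.

Lemma Q_neq0 m : Q m != 0.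
Proof. by rewrite /Q expf_neq0 // q_neq0. Qed.

Lemma q_neq (a b : nat) : (a < b < N)%N -> q ^+ a != q ^+ b.
Proof.
move=> /andP [ab bN]; apply/negP => /eqP E.
have r0 : (0 < b - a < N)%N.
  by rewrite subn_gt0 ab /=; apply: leq_ltn_trans (leq_subr _ _) bN.
have ha : q ^+ a != 0 by rewrite expf_neq0 // q_neq0.
have : q ^+ (b - a) = 1.
  apply: (mulfI ha); rewrite -exprD subnKC; last exact: ltnW.
  by rewrite mulr1 E.
by move/eqP; rewrite (negbTE (qprim _ r0)).
Qed.

Lemma Q_neq (x y : 'I_N) : x != y -> Q x != Q y.
Proof.
rewrite neq_ltn /Q => /orP [h|h].
  by apply: q_neq; rewrite h ltn_ord.
by rewrite eq_sym; apply: q_neq; rewrite h ltn_ord.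
Qed.

Lemma sum_pow (r : nat) : (r < N)%N ->
  \sum_(m < N) (Q m) ^+ r = if r == 0%N then N%:R else 0.
Proof.
case: r => [|r] rN.
  by rewrite /= (eq_bigr (fun _ => 1)) ?sumr_const ?card_ord // => i _; rewrite expr0.
rewrite /= (eq_bigr (fun m : 'I_N => (q ^+ r.+1) ^+ m)); last by move=> i _; rewrite /Q exprAC.
have x1 : q ^+ r.+1 - 1 != 0 by rewrite subr_eq0 qprim.
apply: (mulfI x1); rewrite mulr0 -subrX1 -exprM mulnC exprM qN expr1n subrr //.
Qed.
Lemma sum_inv (k : 'I_N) :
  \sum_(m < N | m != k) (Q m - Q k)^-1 = - ((N%:R - 1) / 2) / Q k.
Proof.
pose sg (m : 'I_N) := k + k - m.
have sg_inj : injective sg by move=> a b; rewrite /sg => /addrI /oppr_inj.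
have sgP m : (sg m != k) = (m != k).
  by rewrite /sg; congr negb; apply/eqP/eqP => [/eqP|->]; [rewrite subr_eq addrC => /eqP/addrI|rewrite addrK].
have QsP m : Q (sg m) * Q m = Q k * Q k by rewrite -!Q_add /sg subrK.
suff : 2 * \sum_(m < N | m != k) (Q m - Q k)^-1 = \sum_(m < N | m != k) (- (Q k)^-1).
  move=> h; have two : (2:F) != 0 by rewrite pnatr_eq0.
  apply: (mulfI two); rewrite h.
  rewrite sumr_const cardC1 card_ord /= -mulr_natl -natr1; have hk := Q_neq0 k; by field; rewrite hk.
symmetry; rewrite (eq_bigr (fun m => (Q m - Q k)^-1 + (Q (sg m) - Q k)^-1)); last first.
  move=> m mk.
  have hx := Q_neq0 m; have hy := Q_neq0 k.
  have hxy : Q m - Q k != 0 by rewrite subr_eq0 Q_neq.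
  have -> : Q (sg m) = Q k * Q k / Q m by rewrite -(QsP m) mulfK.
  have hyx : Q k - Q m != 0 by rewrite subr_eq0 eq_sym Q_neq.
  have -> : Q k * Q k / Q m - Q k = Q k * (Q k - Q m) / Q m by field.
  by field; rewrite hx hy hyx hxy.
rewrite big_split /=.
have -> : \sum_(m < N | m != k) (Q (sg m) - Q k)^-1 = \sum_(m < N | m != k) (Q m - Q k)^-1.
  rewrite [RHS](reindex_inj sg_inj) /=; apply: eq_bigl => m; by rewrite sgP.
by rewrite mulr2n mulrDl !mul1r.
Qed.


Lemma key (k : 'I_N) (j : nat) : (j < N)%N ->
  \sum_(m < N | m != k) Q m ^+ j.+1 / (Q m - Q k) =
  ((N%:R + 1) / 2 - j.+1%:R) * Q k ^+ j.
Proof.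
move=> jN.
have step m : m != k -> Q m ^+ j.+1 / (Q m - Q k) =
    \sum_(i < j.+1) Q m ^+ (j - i) * Q k ^+ i + Q k ^+ j.+1 * (Q m - Q k)^-1.
  move=> mk; have hxy : Q m - Q k != 0 by rewrite subr_eq0 Q_neq.
  apply: (mulfI hxy); rewrite mulrDr mulrCA mulfV // mulr1 mulrCA mulfV // mulr1.
  by rewrite -subrXX subrK.
rewrite (eq_bigr _ step) big_split /= -mulr_sumr sum_inv.
rewrite exchange_big /=.
have inner (i : 'I_j.+1) : \sum_(m < N | m != k) Q m ^+ (j - i) * Q k ^+ i =
    (if (j - i == 0)%N then N%:R else 0) * Q k ^+ i - Q k ^+ j.
  have iN : (j - i < N)%N by apply: leq_ltn_trans (leq_subr _ _) jN.
  have hs := sum_pow (j - i) iN; rewrite (bigD1 k) //= in hs.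
  rewrite -mulr_suml.
  have -> : \sum_(m < N | m != k) Q m ^+ (j - i) =
     (if (j - i == 0)%N then N%:R else 0) - Q k ^+ (j - i) by rewrite -hs addrC addrK.
  by rewrite mulrBl -exprD subnK // -ltnS.
rewrite (eq_bigr _ (fun i _ => inner i)) sumrB sumr_const card_ord.
rewrite big_ord_recr /= subnn eqxx big1 ?add0r; last first.
  by move=> i _; rewrite subn_eq0 leqNgt ltn_ord mul0r.
rewrite exprS; have hy := Q_neq0 k; by field.
Qed.

End Key.

Section Trig.
Variable R : realType.
Definition E (x : R) : R[i] := cos x +i* sin x.

Lemma EM x y : E (x + y) = E x * E y.
Proof. rewrite /E cosD sinD; apply/eqP; rewrite eq_complex /=; apply/andP; split; apply/eqP; ring. Qed.

Lemma E0 : E 0 = 1.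
Proof. by rewrite /E cos0 sin0. Qed.

Lemma EN x : E (- x) * E x = 1.
Proof. by rewrite -EM addNr E0. Qed.

Lemma E_neq0 x : E x != 0.
Proof. by apply/negP => /eqP h; have := EN x; rewrite h mulr0 => /eqP; rewrite eq_sym oner_eq0. Qed.

Lemma Epow k x : E x ^+ k = E (k%:R * x).
Proof.
elim: k => [|k IH]; first by rewrite expr0 mul0r E0.
by rewrite exprS IH -EM mulrSr mulrDl mul1r addrC.
Qed.

Lemma Esub x : E x - E (- x) = 'i * (2 * sin x)%:C.
Proof. rewrite /E cosN sinN; apply/eqP; rewrite eq_complex /=; apply/andP; split; apply/eqP; ring. Qed.

Lemma E2pi : E (pi *+ 2) = 1.
Proof. by rewrite /E cos2pi sin2pi. Qed.

Variable n : nat.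
Local Notation N := n.+1.
Definition th : R := pi / N%:R.
Definition a : R[i] := E th.
Definition q : R[i] := a ^+ 2.

Lemma th_pos : 0 < th.
Proof. by rewrite /th divr_gt0 ?pi_gt0 ?ltr0n. Qed.

Lemma sin_pos d : (0 < d < N)%N -> 0 < sin (th * d%:R).
Proof.
case/andP => d0 dN; apply: sin_gt0_pi; apply/andP; split.
  by rewrite mulr_gt0 ?th_pos ?ltr0n.
have -> : pi = th * N%:R by rewrite /th divfK // pnatr_eq0.
by rewrite ltr_pM2l ?th_pos // ltr_nat.
Qed.

Lemma sin_neq0 (m k : nat) : (m < N)%N -> (k < N)%N -> m != k ->
  sin (th * (m%:R - k%:R)) != 0.
Proof.
move=> mN kN; rewrite neq_ltn => /orP [h|h].
  have hk : (0 < k - m < N)%N.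
    by rewrite subn_gt0 h /=; apply: leq_ltn_trans (leq_subr _ _) kN.
  have e : (m%:R - k%:R : R) = - (k - m)%:R by rewrite natrB; [rewrite opprB | exact: ltnW].
  by rewrite e mulrN sinN oppr_eq0 gt_eqF // sin_pos.
have hk : (0 < m - k < N)%N.
  by rewrite subn_gt0 h /=; apply: leq_ltn_trans (leq_subr _ _) mN.
have e : (m%:R - k%:R : R) = (m - k)%:R by rewrite natrB //; exact: ltnW.
by rewrite e gt_eqF // sin_pos.
Qed.

Lemma apow m : a ^+ m = E (m%:R * th).
Proof. by rewrite /a Epow. Qed.

Lemma qpow m : q ^+ m = a ^+ m * a ^+ m.
Proof. by rewrite /q exprAC expr2. Qed.

Lemma qdiff (m k : nat) :
  q ^+ m - q ^+ k = 'i * (2 * sin (th * (m%:R - k%:R)))%:C * a ^+ m * a ^+ k.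
Proof.
rewrite -Esub !qpow.
set d := th * _.
have h1 : E d * a ^+ k = a ^+ m by rewrite !apow -EM; congr E; rewrite /d; ring.
have h2 : E (- d) * a ^+ m = a ^+ k by rewrite !apow -EM; congr E; rewrite /d; ring.
have -> : (E d - E (- d)) * a ^+ m * a ^+ k = (E d * a ^+ k) * a ^+ m - (E (- d) * a ^+ m) * a ^+ k by ring.
by rewrite h1 h2.
Qed.

Lemma qN : q ^+ N = 1.
Proof.
rewrite qpow apow -EM -E2pi; congr E.
rewrite /th -mulr2n; field; by rewrite addrC natr1 pnatr_eq0.
Qed.

Lemma i_neq0 : 'i != 0 :> R[i].
Proof. by rewrite eq_complex /= oner_eq0 andbF. Qed.

Lemma qprim r : (0 < r < N)%N -> q ^+ r != 1.
Proof.
move=> hr; rewrite -subr_eq0 -(expr0 q) qdiff subr0.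
have h2 : (2 * sin (th * r%:R))%:C != 0.
  by rewrite fmorph_eq0 mulf_neq0 ?pnatr_eq0 // gt_eqF // sin_pos.
by rewrite !mulf_neq0 ?i_neq0 // expf_neq0 // E_neq0.
Qed.

Lemma entryC (m k : 'I_N) : m != k ->
  AquantC R N m k = 'i * (2 * sin th)%:C * a ^+ m * a ^+ k / (q ^+ m - q ^+ k).
Proof.
move=> mk; rewrite /AquantC /Aquant !mxE (negbTE mk) qdiff.
have hS := sin_neq0 m k (ltn_ord m) (ltn_ord k) mk.
have hS' : (sin (th * ((m : nat)%:R - (k : nat)%:R)))%:C != 0 by rewrite fmorph_eq0.
have ha : a ^+ m != 0 by rewrite expf_neq0 // E_neq0.
have hb : a ^+ k != 0 by rewrite expf_neq0 // E_neq0.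
rewrite fmorph_div !rmorphM /= rmorph_nat.
by field; rewrite ha hb hS' i_neq0.
Qed.


Definition lam (j : nat) : R[i] :=
  'i * (2 * sin th * ((N%:R + 1) / 2 - j.+1%:R))%:C.

Lemma eig (j : nat) : (j < N)%N -> eigenvalue (AquantC R N) (lam j).
Proof.
move=> jN; apply/eigenvalueP.
exists (\row_(m < N) a ^+ (j.*2.+1 * m)); last first.
  apply/eqP => /rowP /(_ ord0); rewrite !mxE muln0 expr0 => /eqP.
  by rewrite oner_eq0.
apply/rowP => k; rewrite !mxE (bigD1 k) //= /AquantC /Aquant !mxE eqxx.
rewrite rmorph0 mulr0 add0r.
have hk := @key _ n q qN qprim k j jN.
rewrite (eq_bigr (fun m : 'I_N => ('i * (2 * sin th)%:C * a ^+ k) *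
   ((q ^+ m) ^+ j.+1 / (q ^+ m - q ^+ k)))); last first.
  move=> m mk; have := entryC m k mk; rewrite /AquantC /Aquant !mxE (negbTE mk) => ->.
  have -> : (q ^+ m) ^+ j.+1 = a ^+ (j.*2.+1 * m) * a ^+ m.
    rewrite -exprD /q -!exprM; congr (a ^+ _); lia.
  ring.
rewrite -mulr_sumr hk /lam.
have -> : (2 * sin th * ((N%:R + 1) / 2 - j.+1%:R))%:C =
   (2 * sin th)%:C * ((N%:R + 1) / 2 - j.+1%:R).
  by rewrite rmorphM /= rmorphB /= fmorph_div /= rmorphD /= !rmorph_nat rmorph1.
have -> : a ^+ (j.*2.+1 * k) = a ^+ k * (q ^+ k) ^+ j.
  by rewrite -exprM /q -exprM -exprD; congr (a ^+ _); lia.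
ring.
Qed.
End Trig.

Lemma natE (R : realType) (x y z : nat) : (x + y = z)%N -> (x%:R + y%:R = z%:R :> R).
Proof. by move=> <-; rewrite natrD. Qed.
Arguments natE R {x y z}.

Lemma lam_inj (R : realType) (n : nat) : (0 < n)%N -> injective (lam R n).
Proof.
move=> n0 j1 j2; rewrite /lam => /(mulfI (@i_neq0 R)) /complexI.
have hs : 0 < sin (th R n) by have := @sin_pos R n 1; rewrite mulr1; apply; exact: n0.
have h2 : 2 * sin (th R n) != 0 by rewrite mulf_neq0 ?pnatr_eq0 // gt_eqF.
move=> /(mulfI h2) h; have : (j1.+1%:R : R) = j2.+1%:R by lra.
by move/eqP; rewrite eqr_nat eqSS => /eqP.
Qed.

Lemma eig_iff (R : realType) (n : nat) (z : R[i]) :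
  eigenvalue (AquantC R n.+1) z <-> exists2 j, (j < n.+1)%N & z = lam R n j.
Proof.
split; last by case=> j jN ->; apply: eig.
move=> hz; set rs := [seq lam R n j | j <- iota 0 n.+1].
have allr : all (root (char_poly (AquantC R n.+1))) rs.
  apply/allP => x /mapP [j]; rewrite mem_iota add0n => /andP [_ jN] ->.
  by rewrite -eigenvalue_root_char; apply: eig.
have urs : uniq rs.
  rewrite /rs; case: (posnP n) => [-> //|n0].
  by rewrite map_inj_uniq ?iota_uniq //; apply: lam_inj.
case: (boolP (z \in rs)) => [/mapP [j] | zn].
  by rewrite mem_iota add0n => /andP [_ jN] ->; exists j.
have srs : size rs = n.+1 by rewrite size_map size_iota.
clearbody rs.
have pn0 : char_poly (AquantC R n.+1) != 0 by rewrite monic_neq0 // char_poly_monic.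
have ha : all (root (char_poly (AquantC R n.+1))) (z :: rs).
  by rewrite /= -eigenvalue_root_char hz allr.
have hu : uniq (z :: rs) by rewrite /= zn urs.
by have := max_poly_roots pn0 ha hu; rewrite size_char_poly /= srs ltnn.
Qed.

Lemma negE (R : realType) (x : R) : - ('i * x%:C) = 'i * (- x)%:C.
Proof. by rewrite rmorphN mulrN. Qed.

Lemma lamE (R : realType) (n j : nat) (t : R) :
  ((n%:R + 2) / 2 - (j%:R + 1) = t) ->
  lam R n j = 'i * (2 * sin (pi / n.+1%:R) * t)%:C.
Proof. by rewrite /lam /th -[n.+1%:R]natr1 -[j.+1%:R]natr1 => <-; rewrite -addrA. Qed.

Theorem theorem4 (R : realType) (N : nat) (hN : (1 <= N)%N) (z : R[i]) :
  eigenvalue (AquantC R N) z <->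
  (if odd N then
     z = 0 \/
     exists k : nat, [/\ (1 <= k)%N, (k <= N.-1./2)%N &
       (z = 'i * (2 * sin (pi / N%:R) * k%:R)%:C \/
        z = - ('i * (2 * sin (pi / N%:R) * k%:R)%:C))]
   else
     exists k : nat, [/\ (1 <= k)%N, (k <= N./2)%N &
       (z = 'i * (2 * sin (pi / N%:R) * (k%:R - 2^-1))%:C \/
        z = - ('i * (2 * sin (pi / N%:R) * (k%:R - 2^-1))%:C))]).
Proof.
case: N hN => [//|n] _.
rewrite eig_iff /=.
have hd := odd_double_half n.
set h := n./2 in hd *.
case: ifP => hodd.
-
  have hn : (h + h = n)%N by move: hd; rewrite (negbTE hodd) add0n addnn.
  have hnR := natE R hn.
  split.
  + case=> j jN ->; case: (ltngtP j h) => hj.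
    * right; exists (h - j)%N; split; first by rewrite subn_gt0.
        by rewrite leq_subr.
      left; apply: lamE.
      have e : (j + (h - j) = h)%N by rewrite subnKC // ltnW.
      have := natE R e; lra.
    * right; exists (j - h)%N; split; first by rewrite subn_gt0.
        lia.
      right; rewrite negE -mulrN; apply: lamE.
      have e : (h + (j - h) = j)%N by rewrite subnKC // ltnW.
      have := natE R e; lra.
    * left; rewrite (@lamE R n _ 0) ?mulr0 ?rmorph0 ?mulr0 //.
      rewrite hj; lra.
  + case=> [-> | [k [k1 kh [->|->]]]].
    * exists h; first lia.
      by rewrite (@lamE R n _ 0) ?mulr0 ?rmorph0 ?mulr0 //; lra.
    * exists (h - k)%N; first lia.
      apply/esym/lamE.
      have e : (k + (h - k) = h)%N by rewrite subnKC.
      have := natE R e; lra.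
    * exists (h + k)%N; first lia.
      rewrite negE -mulrN; apply/esym/lamE.
      have := natE R (erefl (h + k)%N); lra.
- (* n odd, N even *)
  have hn : (h + h + 1 = n)%N by move: hd; rewrite (negbFE hodd) addnn add1n addn1.
  have hnR := natE R hn.
  rewrite natrD in hnR.
  have hh : uphalf n = h.+1 by rewrite uphalf_half (negbFE hodd).
  rewrite hh; split.
  + case=> j jN ->; case: (leqP j h) => hj.
    * exists (h.+1 - j)%N; split; [lia | lia |].
      left; apply/lamE.
      have e : (j + (h.+1 - j) = h.+1)%N by rewrite subnKC // ltnW.
      have := natE R e; rewrite -natr1; lra.
    * exists (j - h)%N; split; [lia | lia |].
      right; rewrite negE -mulrN; apply: lamE.
      have e : (h + (j - h) = j)%N by rewrite subnKC // ltnW.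
      have := natE R e; lra.
  + case=> [k [k1 kh [->|->]]].
    * exists (h.+1 - k)%N; first lia.
      apply/esym/lamE.
      have e : (k + (h.+1 - k) = h.+1)%N by rewrite subnKC.
      have := natE R e; rewrite -natr1; lra.
    * exists (h + k)%N; first lia.
      rewrite negE -mulrN; apply/esym/lamE.
      have := natE R (erefl (h + k)%N); lra.
Qed.
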